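(* Let $\varphi(s,v)=\vec c(s)+v\vec q(s)$ be a developable timelike ruled surface of type $M^1_+$ in $\mathbb{R}^3_1$ and let the spacelike ruled surface $\varphi^*(s,v)=\vec c(s)+R\vec a(s)+v\vec q^*(s)$ of type $M^2_+$ be a Mannheim offset of $\varphi$, with $\theta$ the angle between $\vec q$ and $\vec q^*$. Let $\varphi_{h^*}$ and $\varphi_{a^*}$ be the trajectory ruled surfaces generated by $\vec h^*$ and $\vec a^*$. Then (a) $\varphi_{h^*}$ is nondevelopable; (b) $\varphi_{a^*}$ is developable if and only if $\cos\theta+R\frac{ds_1}{ds}\kappa\sin\theta=0$.
   Context: Work in Minkowski 3-space $\mathbb{R}^3_1$ with $\langle x,y\rangle=-x_1y_1+x_2y_2+x_3y_3$, $\|x\|=\sqrt{|\langle x,x\rangle|}$, and Lorentzian cross product $x\times y=(x_2y_3-x_3y_2,\,x_1y_3-x_3y_1,\,x_2y_1-x_1y_2)$. A ruled surface is $\varphi(s,v)=\vec c(s)+v\vec q(s)$ with $\vec q$ a unit non-null vector field, $d\vec q/ds$ non-null, $\vec c$ the striction curve ($\langle d\vec q/ds,d\vec c/ds\rangle=0$) and $s$ the arc length of $\vec c$. Its Frenet frame $\{\vec q,\vec h,\vec a\}$ has central normal $\vec h=\frac{d\vec q/ds}{\|d\vec q/ds\|}$ and asymptotic normal $\vec a=\frac{(d\vec q/ds)\times\vec q}{\|d\vec q/ds\|}$. Type $M^1_+$: $\vec q$ and $\vec h$ spacelike (a timelike surface); type $M^2_+$: $\vec h$ timelike, $\vec q$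 and $d\vec q/ds$ spacelike (a spacelike surface). Let $s_1$ be the arc length of the spherical image of $\vec q$ and $\kappa$ the conical curvature of the directing cone; for type $M^1_+$: $d\vec q/ds_1=\vec h$, $d\vec h/ds_1=-\vec q+\kappa\vec a$, $d\vec a/ds_1=\kappa\vec h$. A ruled surface $\psi(s,v)=\vec b(s)+v\vec e(s)$ has distribution parameter $\det(d\vec b/ds,\vec e,d\vec e/ds)/\langle d\vec e/ds,d\vec e/ds\rangle$ and is developable iff it vanishes identically. A ruled surface $\varphi^*(s,v)=\vec c^*(s)+v\vec q^*(s)$ with Frenet frame $\{\vec q^*,\vec h^*,\vec a^*\}$ is a Mannheim offset of $\varphi$ if its rulings correspond one-to-one with those of $\varphi$ and $\vec h^*=\vec a$; then $\vec c^*=\vec c+R\vec a$ with $R$ constant since $\varphi$ is developable, and with $\theta$ the angle between $\vec q$ and $\vec q^*$, $\vec q^*=\cos\theta\,\vec q+\sin\theta\,\vec h$, $\vec a^*=\sin\theta\,\vec q-\cos\theta\,\vec h$. The trajectory ruled surfaces are $\varphi_{h^*}(s,v)=\vec c^*(s)+v\vec h^*(s)$ and $\varphi_{a^*}(s,v)=\vec c^*(s)+v\vec a^*(s)$. *)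

(* Defs.v *)
From Stdlib Require Import Reals.
From Coquelicot Require Import Coquelicot.
Open Scope R_scope.

Record vec := mkv { x1 : R; x2 : R; x3 : R }.

Definition vadd (x y : vec) : vec := mkv (x1 x + x1 y) (x2 x + x2 y) (x3 x + x3 y).
Definition vscal (k : R) (x : vec) : vec := mkv (k * x1 x) (k * x2 x) (k * x3 x).

Definition lor (x y : vec) : R := - x1 x * x1 y + x2 x * x2 y + x3 x * x3 y.
Definition lnorm (x : vec) : R := sqrt (Rabs (lor x x)).
Definition lcross (x y : vec) : vec :=
  mkv (x2 x * x3 y - x3 x * x2 y)
      (x1 x * x3 y - x3 x * x1 y)
      (x2 x * x1 y - x1 x * x2 y).
Definition det3 (x y z : vec) : R :=
  x1 x * (x2 y * x3 z - x3 y * x2 z)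
  - x2 x * (x1 y * x3 z - x3 y * x1 z)
  + x3 x * (x1 y * x2 z - x2 y * x1 z).

Definition spacelike (x : vec) : Prop := 0 < lor x x.
Definition timelike (x : vec) : Prop := lor x x < 0.
Definition nonnull (x : vec) : Prop := lor x x <> 0.

Definition vD (f : R -> vec) (s : R) : vec :=
  mkv (Derive (fun t => x1 (f t)) s)
      (Derive (fun t => x2 (f t)) s)
      (Derive (fun t => x3 (f t)) s).
Definition vdiff_at (f : R -> vec) (s : R) : Prop :=
  ex_derive (fun t => x1 (f t)) s /\ ex_derive (fun t => x2 (f t)) s /\
  ex_derive (fun t => x3 (f t)) s.

Definition in_I (lo hi : Rbar) (s : R) : Prop := Rbar_lt lo s /\ Rbar_lt s hi.

Definition C2_on (lo hi : Rbar) (f : R -> vec) : Prop :=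
  forall s, in_I lo hi s -> vdiff_at f s /\ vdiff_at (vD f) s.

(** Distribution parameter of psi(s,v) = b(s) + v e(s). *)
Definition dist_param (b e : R -> vec) (s : R) : R :=
  det3 (vD b s) (e s) (vD e s) / lor (vD e s) (vD e s).
Definition developable_on (lo hi : Rbar) (b e : R -> vec) : Prop :=
  forall s, in_I lo hi s -> dist_param b e s = 0.

Definition central_normal (q : R -> vec) (s : R) : vec :=
  vscal (/ lnorm (vD q s)) (vD q s).
Definition asymptotic_normal (q : R -> vec) (s : R) : vec :=
  vscal (/ lnorm (vD q s)) (lcross (vD q s) (q s)).

(** ds1/ds, s1 the arc length of the spherical image of q. *)
Definition ds1 (q : R -> vec) (s : R) : R := lnorm (vD q s).

Definition unit_nonnull_ruling (lo hi : Rbar) (q : R -> vec) : Prop :=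
  forall s, in_I lo hi s -> Rabs (lor (q s) (q s)) = 1 /\ nonnull (vD q s).

Definition striction (lo hi : Rbar) (c q : R -> vec) : Prop :=
  forall s, in_I lo hi s -> lor (vD q s) (vD c s) = 0.

Definition arc_length (lo hi : Rbar) (c : R -> vec) : Prop :=
  forall s, in_I lo hi s -> lnorm (vD c s) = 1.

Definition type_M1p (lo hi : Rbar) (q : R -> vec) : Prop :=
  forall s, in_I lo hi s -> spacelike (q s) /\ spacelike (central_normal q s).
Definition type_M2p (lo hi : Rbar) (q : R -> vec) : Prop :=
  forall s, in_I lo hi s -> timelike (central_normal q s) /\ spacelike (q s).

(* Main.v *)
Require Import Defs.
From Stdlib Require Import Reals Lra Psatz.
From Coquelicot Require Import Coquelicot.
Open Scope R_scope.

Lemma vec_ext (u v: vec) : x1 u = x1 v -> x2 u = x2 v -> x3 u = x3 v -> u = v.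
Proof. destruct u, v; simpl; intros; subst; reflexivity. Qed.

Ltac vring := apply vec_ext; simpl; ring.
Ltac lring := unfold lor, det3, lcross, vadd, vscal; simpl; ring.

Lemma dc_id x y z : lcross (lcross x y) z = vadd (vscal (lor y z) x) (vscal (- lor x z) y).
Proof. unfold lor; vring. Qed.
Lemma lag_id x y z w : lor (lcross x y) (lcross z w) = - (lor x z * lor y w - lor x w * lor y z).
Proof. lring. Qed.
Lemma trip_id x y z : det3 x y z = - lor (lcross x y) z.
Proof. lring. Qed.
Lemma cross_anti x y : lcross y x = vscal (-1) (lcross x y).
Proof. vring. Qed.
Lemma cross_self x : lcross x x = mkv 0 0 0.
Proof. vring. Qed.
Lemma lor_sym x y : lor x y = lor y x.
Proof. lring. Qed.
Lemma lor_scal_l k x y : lor (vscal k x) y = k * lor x y.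
Proof. lring. Qed.
Lemma lor_scal_r k x y : lor x (vscal k y) = k * lor x y.
Proof. lring. Qed.
Lemma lor_add_l x y z : lor (vadd x y) z = lor x z + lor y z.
Proof. lring. Qed.
Lemma lor_add_r x y z : lor x (vadd y z) = lor x y + lor x z.
Proof. lring. Qed.
Lemma cross_scal_l k x y : lcross (vscal k x) y = vscal k (lcross x y).
Proof. vring. Qed.
Lemma cross_scal_r k x y : lcross x (vscal k y) = vscal k (lcross x y).
Proof. vring. Qed.
Lemma cross_add_l x y z : lcross (vadd x y) z = vadd (lcross x z) (lcross y z).
Proof. vring. Qed.
Lemma cross_add_r x y z : lcross x (vadd y z) = vadd (lcross x y) (lcross x z).
Proof. vring. Qed.

Lemma frame_ids Q H : lor Q Q = 1 -> lor H H = 1 -> lor Q H = 0 ->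
  let A := lcross H Q in
  lor A A = -1 /\ lor A Q = 0 /\ lor A H = 0 /\ lcross A Q = H /\
  lcross A H = vscal (-1) Q /\ det3 Q H A = -1 /\ lcross H Q = A.
Proof.
  intros HQ HH HQH A. subst A.
  assert (HHQ : lor H Q = 0) by (rewrite lor_sym; auto).
  repeat split.
  - rewrite lag_id. rewrite HQ, HH, HQH, HHQ. ring.
  - lring.
  - lring.
  - rewrite dc_id, HQ, HHQ. vring.
  - rewrite dc_id, HQH, HH. vring.
  - rewrite trip_id, lag_id, HQ, HH, HQH, HHQ. ring.
Qed.

Lemma d_eq (f : R -> R) (s d d' : R) : is_derive f s d -> d = d' -> is_derive f s d'.
Proof. intros H ->; auto. Qed.
Lemma d_mul (f g : R -> R) (s a b : R) : is_derive f s a -> is_derive g s b ->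
  is_derive (fun t => f t * g t) s (a * g s + f s * b).
Proof. intros Hf Hg. eapply d_eq. apply (is_derive_mult f g s a b Hf Hg).
  intros; apply Rmult_comm. reflexivity. Qed.
Lemma d_add (f g : R -> R) (s a b : R) : is_derive f s a -> is_derive g s b ->
  is_derive (fun t => f t + g t) s (a + b).
Proof. intros Hf Hg. apply (is_derive_plus f g s a b Hf Hg). Qed.
Lemma d_sub (f g : R -> R) (s a b : R) : is_derive f s a -> is_derive g s b ->
  is_derive (fun t => f t - g t) s (a - b).
Proof. intros Hf Hg. apply (is_derive_minus f g s a b Hf Hg). Qed.
Lemma d_opp (f : R -> R) (s a : R) : is_derive f s a -> is_derive (fun t => - f t) s (- a).
Proof. intros Hf. apply (is_derive_opp f s a Hf). Qed.

Definition vder (f : R -> vec) s (v : vec) :=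
  is_derive (fun t => x1 (f t)) s (x1 v) /\ is_derive (fun t => x2 (f t)) s (x2 v) /\
  is_derive (fun t => x3 (f t)) s (x3 v).

Lemma vder_vD f s : vdiff_at f s -> vder f s (vD f s).
Proof. intros [H1 [H2 H3]]. repeat split; simpl; apply Derive_correct; auto. Qed.
Lemma vder_unique f s v : vder f s v -> vD f s = v.
Proof. intros [H1 [H2 H3]]. apply vec_ext; simpl; apply is_derive_unique; auto. Qed.
Lemma vder_ex f s v : vder f s v -> vdiff_at f s.
Proof. intros [H1 [H2 H3]]. repeat split; eexists; eauto. Qed.
Lemma vder_ext_loc f g s v : locally s (fun t => f t = g t) -> vder f s v -> vder g s v.
Proof. intros Hl [H1 [H2 H3]]. repeat split;
  (eapply is_derive_ext_loc; [| eassumption]); simpl;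
  (eapply filter_imp; [| exact Hl]); intros t Ht; rewrite Ht; reflexivity. Qed.
Lemma vder_ext f g s v : (forall t, f t = g t) -> vder f s v -> vder g s v.
Proof. intros He. apply vder_ext_loc. apply filter_forall. auto. Qed.

Lemma vder_lor f g s u w : vder f s u -> vder g s w ->
  is_derive (fun t => lor (f t) (g t)) s (lor u (g s) + lor (f s) w).
Proof. intros [F1 [F2 F3]] [G1 [G2 G3]]. unfold lor.
  eapply d_eq.
  apply d_add; [apply d_add|].
  apply d_mul. apply d_opp. exact F1. exact G1.
  apply d_mul. exact F2. exact G2.
  apply d_mul. exact F3. exact G3.
  simpl. ring. Qed.

Lemma vder_cross f g s u w : vder f s u -> vder g s w ->
  vder (fun t => lcross (f t) (g t)) s (vadd (lcross u (g s)) (lcross (f s) w)).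
Proof. intros [F1 [F2 F3]] [G1 [G2 G3]]. unfold lcross, vadd. simpl.
  split; [|split]; simpl; (eapply d_eq; [apply d_sub; apply d_mul; eassumption | simpl; ring]). Qed.

Lemma vder_scal (k : R -> R) f s dk u : is_derive k s dk -> vder f s u ->
  vder (fun t => vscal (k t) (f t)) s (vadd (vscal dk (f s)) (vscal (k s) u)).
Proof. intros Hk [F1 [F2 F3]]. unfold vscal, vadd; simpl.
  split; [|split]; simpl; (eapply d_eq; [apply d_mul; eassumption | simpl; ring]). Qed.

Lemma vder_add f g s u w : vder f s u -> vder g s w ->
  vder (fun t => vadd (f t) (g t)) s (vadd u w).
Proof. intros [F1 [F2 F3]] [G1 [G2 G3]]. unfold vadd; simpl.
  split; [|split]; simpl; apply d_add; auto. Qed.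

Lemma d_invnorm (F : R -> R) (s dF : R) : is_derive F s dF -> F s <> 0 ->
  ex_derive (fun t => / sqrt (Rabs (F t))) s.
Proof. intros HF Hn. eexists. apply is_derive_inv.
  apply is_derive_sqrt. apply is_derive_Rabs; eauto. apply Rabs_pos_lt; auto.
  apply Rgt_not_eq, sqrt_lt_R0, Rabs_pos_lt; auto. Qed.

Lemma in_I_loc lo hi s : in_I lo hi s -> locally s (in_I lo hi).
Proof. intros H. apply (open_and _ _ (open_Rbar_gt lo) (open_Rbar_lt hi)). exact H. Qed.

Lemma in_I_ex lo hi : Rbar_lt lo hi -> exists s, in_I lo hi s.
Proof. unfold in_I. destruct lo as [l| |], hi as [h| |]; simpl; intros H; try contradiction.
  - exists ((l+h)/2); simpl; lra.
  - exists (l+1); simpl; lra.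
  - exists (h-1); simpl; lra.
  - exists 0; simpl; auto.
Qed.

Lemma loc_nonzero (Y : R -> R) s : continuous Y s -> Y s <> 0 -> locally s (fun t => Y t <> 0).
Proof. intros Hc Hn.
  assert (Hp : 0 < Rabs (Y s)) by (apply Rabs_pos_lt; auto).
  apply (Hc (fun y => y <> 0)).
  exists (mkposreal _ Hp). intros y Hy Hy0. subst y.
  unfold ball in Hy; simpl in Hy; unfold AbsRing_ball, abs, minus, plus, opp in Hy; simpl in Hy.
  rewrite Rplus_0_l, Rabs_Ropp in Hy. lra.
Qed.

Lemma d_const (k s : R) : is_derive (fun _ => k) s 0.
Proof. exact (is_derive_const k s). Qed.

Lemma complete Q H v : lor Q Q = 1 -> lor H H = 1 -> lor Q H = 0 ->
  lor H v = 0 -> det3 v Q H = 0 -> v = vscal (lor v Q) Q.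
Proof.
  intros HQ HH HQH Hv Hd.
  destruct (frame_ids Q H HQ HH HQH) as [AA [AQ [AH [AxQ [AxH [D HA]]]]]].
  set (A := lcross H Q) in *.
  set (w := lcross v Q).
  assert (wH : lor w H = 0) by (unfold w; rewrite trip_id in Hd; lra).
  assert (wQ : lor Q w = 0) by (unfold w; lring).
  assert (wH' : lor H w = 0) by (rewrite lor_sym; auto).
  assert (wA : lor w A = 0).
  { unfold w, A. rewrite lag_id. rewrite (lor_sym v H), Hv, HQ, HQH. ring. }
  assert (Aw : lcross A w = mkv 0 0 0).
  { unfold A at 1. rewrite dc_id, wQ, wH'. vring. }
  assert (w0 : w = mkv 0 0 0).
  { assert (E : lcross (lcross A w) A = w).
    { rewrite dc_id, wA, AA. vring. }
    rewrite <- E, Aw. vring. }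
  assert (E : lcross w Q = vadd v (vscal (- lor v Q) Q)).
  { unfold w. rewrite dc_id, HQ. vring. }
  rewrite w0 in E.
  apply vec_ext; simpl;
  [ apply (f_equal x1) in E | apply (f_equal x2) in E | apply (f_equal x3) in E ];
  simpl in E; lra.
Qed.

Lemma vscal_inv_eq k u v : k <> 0 -> vscal (/ k) u = v -> u = vscal k v.
Proof. intros Hk <-. apply vec_ext; simpl; field; auto. Qed.

Lemma lor_pos_unit x : Rabs (lor x x) = 1 -> 0 < lor x x -> lor x x = 1.
Proof. intros H1 H2. rewrite Rabs_pos_eq in H1; lra. Qed.

Lemma lnorm_pos x : nonnull x -> 0 < lnorm x.
Proof. intros H. unfold lnorm. apply sqrt_lt_R0, Rabs_pos_lt; auto. Qed.

Lemma a_der_id Q H N k :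
  vadd (lcross (vscal N (vadd (vscal (-1) Q) (vscal k (lcross H Q)))) Q) (lcross H (vscal N H))
  = vscal (N*k) (lcross (lcross H Q) Q).
Proof. vring. Qed.

Lemma det_lin_a Q H A k m : det3 (vadd Q (vscal k H)) A (vscal m H) = m * det3 Q A H.
Proof. lring. Qed.
Lemma det_QAH Q H : det3 Q (lcross H Q) H = - det3 Q H (lcross H Q).
Proof. lring. Qed.
Lemma astar_der_id A Q H m g c sn :
  vadd (lcross (vscal m H) (vadd (vscal c Q) (vscal sn H))) (lcross A (vscal g A))
  = vscal (m*c) (lcross H Q).
Proof. vring. Qed.
Lemma det_lin_b Q H A k c sn m :
  det3 (vadd Q (vscal k H)) (vadd (vscal c H) (vscal (- sn) Q)) (vscal m A)
  = m * (c + k * sn) * det3 Q H A.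
Proof. lring. Qed.

Lemma vscal_invK k v : k <> 0 -> vscal (/ k) (vscal k v) = v.
Proof. intros Hk. apply vec_ext; simpl; field; auto. Qed.

Theorem corollary6p4
  (lo hi : Rbar) (c q qstar : R -> vec) (kappa theta : R -> R) (Rc : R) :
  Rbar_lt lo hi ->
  (* phi(s,v) = c(s) + v q(s): a ruled surface with striction curve c, arc length s *)
  (forall s, in_I lo hi s -> vdiff_at c s) ->
  C2_on lo hi q ->
  unit_nonnull_ruling lo hi q ->
  striction lo hi c q ->
  arc_length lo hi c ->
  (* orientation convention of the paper: dc/ds = cosh(sigma) q + sinh(sigma) a *)
  (forall s, in_I lo hi s -> 0 < lor (vD c s) (q s)) ->
  (* of type M^1_+ and developable *)
  type_M1p lo hi q ->
  developable_on lo hi c q ->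
  (* conical curvature kappa: dh/ds1 = -q + kappa a *)
  (forall s, in_I lo hi s ->
     vD (central_normal q) s =
     vscal (ds1 q s) (vadd (vscal (-1) (q s)) (vscal (kappa s) (asymptotic_normal q s)))) ->
  (* phi*(s,v) = c(s) + R a(s) + v q*(s): a ruled surface of type M^2_+ ... *)
  let cstar := fun s => vadd (c s) (vscal Rc (asymptotic_normal q s)) in
  C2_on lo hi qstar ->
  unit_nonnull_ruling lo hi qstar ->
  striction lo hi cstar qstar ->
  type_M2p lo hi qstar ->
  (* ... which is a Mannheim offset of phi: h* = a *)
  (forall s, in_I lo hi s -> central_normal qstar s = asymptotic_normal q s) ->
  (* theta is the angle between q and q*: q* = cos theta q + sin theta h *)
  (forall s, in_I lo hi s ->
     qstar s = vadd (vscal (cos (theta s)) (q s))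
                    (vscal (sin (theta s)) (central_normal q s))) ->
  (* (a) phi_{h*} is nondevelopable *)
  ~ developable_on lo hi cstar (central_normal qstar) /\
  (* (b) phi_{a*} developable iff cos theta + R (ds1/ds) kappa sin theta = 0 *)
  (developable_on lo hi cstar (asymptotic_normal qstar) <->
   forall s, in_I lo hi s ->
     cos (theta s) + Rc * ds1 q s * kappa s * sin (theta s) = 0).
Proof.
  intros Hlohi Hc Hq2 Hqu Hstr Harc Hpos HM1 Hdev Hkap cstar Hqs2 Hqsu Hsstr HM2 Hmann Hth.
  pose (h := central_normal q). pose (a := asymptotic_normal q).
  pose (N := fun t => lnorm (vD q t)).
  pose (g := fun t => lnorm (vD qstar t)).
  assert (S1 : forall s, in_I lo hi s -> lor (q s) (q s) = 1).
  { intros s Hs. apply lor_pos_unit. apply (Hqu s Hs). apply (HM1 s Hs). }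
  assert (S2 : forall s, in_I lo hi s -> 0 < N s).
  { intros s Hs. apply lnorm_pos, (Hqu s Hs). }
  assert (S3 : forall s, in_I lo hi s -> vD q s = vscal (N s) (h s)).
  { intros s Hs. apply vscal_inv_eq. apply Rgt_not_eq, S2; auto. reflexivity. }
  assert (S4 : forall s, in_I lo hi s -> lor (h s) (h s) = 1).
  { intros s Hs. assert (Hp := proj2 (HM1 s Hs)). unfold spacelike in Hp.
    assert (HN := S2 s Hs).
    assert (E : lor (vD q s) (vD q s) = N s * N s * lor (h s) (h s)).
    { rewrite (S3 s Hs), lor_scal_l, lor_scal_r. ring. }
    assert (E2 : N s * N s = Rabs (lor (vD q s) (vD q s))).
    { unfold N, lnorm. apply sqrt_sqrt, Rabs_pos. }
    rewrite Rabs_pos_eq in E2 by (rewrite E; apply Rmult_le_pos; [apply Rle_0_sqr | apply Rlt_le; exact Hp]).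
    rewrite E in E2. assert (HNN : N s * N s <> 0) by (apply Rgt_not_eq, Rmult_lt_0_compat; auto).
    apply (Rmult_eq_reg_l (N s * N s)); auto. rewrite Rmult_1_r. symmetry. exact E2. }
  assert (S5 : forall s, in_I lo hi s -> lor (q s) (h s) = 0).
  { intros s Hs.
    assert (D1 := vder_lor q q s _ _ (vder_vD q s (proj1 (Hq2 s Hs))) (vder_vD q s (proj1 (Hq2 s Hs)))).
    assert (D2 : is_derive (fun t => lor (q t) (q t)) s 0).
    { apply (is_derive_ext_loc (fun _ => 1)); [|apply d_const].
      eapply filter_imp; [|apply (in_I_loc _ _ _ Hs)]. intros t Ht. symmetry. apply S1; auto. }
    assert (E := is_derive_unique _ _ _ D1). rewrite (is_derive_unique _ _ _ D2) in E.
    rewrite (lor_sym (vD q s)) in E. rewrite (S3 s Hs), lor_scal_r in E.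
    assert (HN := S2 s Hs). nra. }
  assert (S6 : forall t, a t = lcross (h t) (q t)).
  { intros t. unfold a, h, asymptotic_normal, central_normal. rewrite cross_scal_l. reflexivity. }
  assert (FR : forall s, in_I lo hi s -> let A := lcross (h s) (q s) in
    lor A A = -1 /\ lor A (q s) = 0 /\ lor A (h s) = 0 /\ lcross A (q s) = h s /\
    lcross A (h s) = vscal (-1) (q s) /\ det3 (q s) (h s) A = -1 /\ lcross (h s) (q s) = A).
  { intros s Hs. apply frame_ids; auto. }
  assert (S7 : forall s, in_I lo hi s -> vder h s (vD h s)).
  { intros s Hs. apply vder_vD. 
    assert (Hd2 := vder_vD _ _ (proj2 (Hq2 s Hs))).
    assert (HF := vder_lor _ _ s _ _ Hd2 Hd2).
    assert (Hnn : lor (vD q s) (vD q s) <> 0) by apply (Hqu s Hs).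
    destruct (d_invnorm _ _ _ HF Hnn) as [dk Hk].
    eapply vder_ex. apply (vder_scal _ _ _ _ _ Hk Hd2). }

  assert (S8 : forall s, in_I lo hi s -> vder a s (vscal (N s * kappa s) (h s))).
  { intros s Hs.
    assert (D := vder_cross h q s _ _ (S7 s Hs) (vder_vD q s (proj1 (Hq2 s Hs)))).
    apply (vder_ext (fun t => lcross (h t) (q t))); [intro t; symmetry; apply S6|].
    replace (vscal (N s * kappa s) (h s)) with (vadd (lcross (vD h s) (q s)) (lcross (h s) (vD q s))); [exact D|].
    change (vD h s) with (vD (central_normal q) s). rewrite (Hkap s Hs).
    change (asymptotic_normal q s) with (a s). rewrite (S6 s), (S3 s Hs).
    change (ds1 q s) with (N s). rewrite a_der_id.
    destruct (FR s Hs) as [_ [_ [_ [AQ _]]]]. rewrite AQ. reflexivity. }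
  assert (S9 : forall s, in_I lo hi s -> vD c s = q s).
  { intros s Hs.
    assert (HN := S2 s Hs).
    assert (E1 : lor (h s) (vD c s) = 0).
    { assert (E := Hstr s Hs). rewrite (S3 s Hs), lor_scal_l in E.
      apply (Rmult_eq_reg_l (N s)); [rewrite Rmult_0_r; exact E| lra]. }
    assert (E2 : det3 (vD c s) (q s) (h s) = 0).
    { assert (E := Hdev s Hs). unfold dist_param in E.
      assert (Hnn : lor (vD q s) (vD q s) <> 0) by apply (Hqu s Hs).
      assert (E' : det3 (vD c s) (q s) (vD q s) = 0).
      { apply (Rmult_eq_reg_r (/ lor (vD q s) (vD q s))). rewrite Rmult_0_l. exact E.
        apply Rinv_neq_0_compat; auto. }
      rewrite (S3 s Hs) in E'.
      replace (det3 (vD c s) (q s) (vscal (N s) (h s))) with (N s * det3 (vD c s) (q s) (h s)) in E' by lring.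
      apply (Rmult_eq_reg_l (N s)); [rewrite Rmult_0_r; exact E'| lra]. }
    assert (E3 := complete (q s) (h s) (vD c s) (S1 s Hs) (S4 s Hs) (S5 s Hs) E1 E2).
    assert (Hp := Hpos s Hs).
    assert (Ha := Harc s Hs). unfold lnorm in Ha.
    assert (Hab : Rabs (lor (vD c s) (vD c s)) = 1).
    { rewrite <- (sqrt_sqrt (Rabs _)) by apply Rabs_pos. rewrite Ha. ring. }
    rewrite E3 in Hab. rewrite lor_scal_l, lor_scal_r, (S1 s Hs) in Hab.
    assert (Hal : lor (vD c s) (q s) = 1).
    { rewrite Rabs_pos_eq in Hab by nra. nra. }
    rewrite E3, Hal. apply vec_ext; simpl; ring. }
  assert (S10 : forall s, in_I lo hi s -> 0 < g s /\ vD qstar s = vscal (g s) (a s)).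
  { intros s Hs. assert (Hg : 0 < g s) by (apply lnorm_pos, (Hqsu s Hs)).
    split; auto. apply vscal_inv_eq. lra. exact (Hmann s Hs). }
  assert (Qa : forall s, in_I lo hi s -> lor (qstar s) (a s) = 0).
  { intros s Hs. rewrite (Hth s Hs), (S6 s). destruct (FR s Hs) as [_ [AQ [AH _]]].
    change (central_normal q s) with (h s).
    rewrite lor_add_l, !lor_scal_l, (lor_sym (q s)), (lor_sym (h s)), AQ, AH. ring. }
  assert (S11 : forall s, in_I lo hi s -> g s = N s * kappa s * sin (theta s)).
  { intros s Hs.
    assert (D1 := vder_lor qstar a s _ _ (vder_vD qstar s (proj1 (Hqs2 s Hs))) (S8 s Hs)).
    assert (D2 : is_derive (fun t => lor (qstar t) (a t)) s 0).
    { apply (is_derive_ext_loc (fun _ => 0)); [|apply d_const].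
      eapply filter_imp; [|apply (in_I_loc _ _ _ Hs)]. intros t Ht. symmetry. apply Qa; auto. }
    assert (E := is_derive_unique _ _ _ D1). rewrite (is_derive_unique _ _ _ D2) in E.
    destruct (S10 s Hs) as [Hg Eq]. rewrite Eq, (Hth s Hs) in E.
    change (central_normal q s) with (h s) in E.
    rewrite lor_scal_l, lor_add_l, !lor_scal_l, !lor_scal_r in E.
    rewrite (S6 s) in E. destruct (FR s Hs) as [AA _]. rewrite AA in E.
    rewrite (S4 s Hs), (S5 s Hs) in E. ring_simplify in E. nra. }
  assert (S12 : forall s, in_I lo hi s -> vD cstar s = vadd (q s) (vscal (Rc * (N s * kappa s)) (h s))).
  { intros s Hs. apply vder_unique.
    assert (D := vder_add c (fun t => vscal Rc (a t)) s _ _ (vder_vD c s (Hc s Hs))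
                   (vder_scal (fun _ => Rc) a s _ _ (d_const Rc s) (S8 s Hs))).
    rewrite (S9 s Hs) in D.
    replace (vadd (q s) (vscal (Rc * (N s * kappa s)) (h s))) with
      (vadd (q s) (vadd (vscal 0 (a s)) (vscal Rc (vscal (N s * kappa s) (h s))))) by vring.
    exact D. }
  assert (Hmk : forall s, in_I lo hi s -> N s * kappa s <> 0 /\ N s * sin (theta s) <> 0).
  { intros s Hs. destruct (S10 s Hs) as [Hg _]. rewrite (S11 s Hs) in Hg. split; intro Z.
    - rewrite Z in Hg; lra.
    - replace (N s * kappa s * sin (theta s)) with (N s * sin (theta s) * kappa s) in Hg by ring.
      rewrite Z in Hg; lra. }
  split.
  { intros Hd. destruct (in_I_ex _ _ Hlohi) as [s Hs].
    assert (E := Hd s Hs). unfold dist_param in E.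
    assert (Dh : vD (central_normal qstar) s = vscal (N s * kappa s) (h s)).
    { apply vder_unique. apply (vder_ext_loc a).
      eapply filter_imp; [|apply (in_I_loc _ _ _ Hs)]. intros t Ht. symmetry. apply Hmann; auto.
      apply S8; auto. }
    rewrite Dh, (S12 s Hs), (Hmann s Hs) in E. change (asymptotic_normal q s) with (a s) in E.
    rewrite det_lin_a, lor_scal_l, lor_scal_r, (S4 s Hs), (S6 s), det_QAH in E.
    destruct (FR s Hs) as [_ [_ [_ [_ [_ [D _]]]]]]. rewrite D in E.
    destruct (Hmk s Hs) as [Hm _].
    apply (Rinv_neq_0_compat _ Hm). rewrite <- E. field. split; intro Z; apply Hm; rewrite Z; ring. }
  assert (Sb : forall s, in_I lo hi s ->
     dist_param cstar (asymptotic_normal qstar) s =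
     ((N s * kappa s * cos (theta s)) * (cos (theta s) + Rc * (N s * kappa s) * sin (theta s)) * -1)
     / ((N s * kappa s * cos (theta s)) * ((N s * kappa s * cos (theta s)) * -1))).
  { intros s Hs. unfold dist_param.
    assert (La : locally s (fun t => lcross (a t) (qstar t) = asymptotic_normal qstar t)).
    { eapply filter_imp; [|apply (in_I_loc _ _ _ Hs)]. intros t Ht.
      destruct (S10 t Ht) as [Hg Eq]. unfold asymptotic_normal. change (lnorm (vD qstar t)) with (g t). rewrite Eq, cross_scal_l.
      assert (HN := S2 t Ht).
      apply vec_ext; simpl; field; repeat split; first [apply Rgt_not_eq; exact HN | lra]. }
    assert (Da : vD (asymptotic_normal qstar) s = vscal (N s * kappa s * cos (theta s)) (lcross (h s) (q s))).
    { apply vder_unique. apply (vder_ext_loc _ _ _ _ La).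
      assert (D := vder_cross a qstar s _ _ (S8 s Hs) (vder_vD qstar s (proj1 (Hqs2 s Hs)))).
      destruct (S10 s Hs) as [_ Eq]. rewrite Eq, (Hth s Hs) in D.
      change (central_normal q s) with (h s) in D.
      rewrite astar_der_id in D. exact D. }
    assert (As : asymptotic_normal qstar s = vadd (vscal (cos (theta s)) (h s)) (vscal (- sin (theta s)) (q s))).
    { destruct (S10 s Hs) as [Hg Eq]. unfold asymptotic_normal at 1. change (lnorm (vD qstar s)) with (g s). rewrite Eq, cross_scal_l.
      replace (vscal (/ g s) (vscal (g s) (lcross (a s) (qstar s)))) with (lcross (a s) (qstar s))
        by (symmetry; apply vscal_invK; lra).
      rewrite (S6 s), (Hth s Hs). change (central_normal q s) with (h s).
      destruct (FR s Hs) as [_ [_ [_ [AxQ [AxH _]]]]].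
      rewrite cross_add_r, !cross_scal_r, AxQ, AxH. vring. }
    rewrite Da, As, (S12 s Hs), det_lin_b, lor_scal_l, lor_scal_r.
    destruct (FR s Hs) as [AA [_ [_ [_ [_ [D _]]]]]]. rewrite AA, D. reflexivity. }
  assert (Key : forall s, in_I lo hi s ->
    (dist_param cstar (asymptotic_normal qstar) s = 0 <->
     cos (theta s) * (cos (theta s) + Rc * ds1 q s * kappa s * sin (theta s)) = 0)).
  { intros s Hs. rewrite (Sb s Hs). destruct (Hmk s Hs) as [H1 _].
    change (ds1 q s) with (N s).
    replace (Rc * N s * kappa s * sin (theta s)) with (Rc * (N s * kappa s) * sin (theta s)) by ring.
    set (X := cos (theta s) + Rc * (N s * kappa s) * sin (theta s)).
    destruct (Req_dec (cos (theta s)) 0) as [Z|Z].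
    - rewrite Z. split; intros _; [ring| unfold Rdiv; ring].
    - assert (Hm : N s * kappa s * cos (theta s) <> 0) by (apply Rmult_integral_contrapositive; split; auto).
      replace (N s * kappa s * cos (theta s) * X * -1 /
        (N s * kappa s * cos (theta s) * (N s * kappa s * cos (theta s) * -1)))
        with (X / (N s * kappa s * cos (theta s))) by (field; repeat split; intro Z0; apply Hm; rewrite Z0; ring).
      split; intro E.
      + unfold Rdiv in E. apply Rmult_integral in E. destruct E as [E|E].
        * rewrite E; ring.
        * exfalso; apply (Rinv_neq_0_compat _ Hm); auto.
      + apply Rmult_integral in E. destruct E as [E|E]; [contradiction|]. rewrite E. unfold Rdiv; ring. }
  split.
  - intros Hd s0 Hs0.
    destruct (Req_dec (cos (theta s0) + Rc * ds1 q s0 * kappa s0 * sin (theta s0)) 0) as [Z|Z]; auto.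
    exfalso.
    pose (Y := fun t => lor (qstar t) (q t) - Rc * lor (vD qstar t) (a t)).
    assert (HY : forall t, in_I lo hi t -> Y t = cos (theta t) + Rc * ds1 q t * kappa t * sin (theta t)).
    { intros t Ht. unfold Y. destruct (S10 t Ht) as [_ Eq]. rewrite Eq, (Hth t Ht), (S11 t Ht).
      change (central_normal q t) with (h t).
      rewrite lor_add_l, !lor_scal_l, (S1 t Ht), (lor_sym (h t)), (S5 t Ht), (S6 t).
      destruct (FR t Ht) as [AA _]. rewrite AA. change (ds1 q t) with (N t). ring. }
    assert (Dq := vder_vD q s0 (proj1 (Hq2 s0 Hs0))).
    assert (Dqs := vder_vD qstar s0 (proj1 (Hqs2 s0 Hs0))).
    assert (Dqs2 := vder_vD (vD qstar) s0 (proj2 (Hqs2 s0 Hs0))).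
    assert (DY : ex_derive Y s0).
    { eexists. unfold Y. apply d_sub. apply (vder_lor _ _ _ _ _ Dqs Dq).
      apply d_mul. apply d_const. apply (vder_lor _ _ _ _ _ Dqs2 (S8 s0 Hs0)). }
    assert (Y0 : Y s0 <> 0) by (rewrite HY; auto).
    assert (LY := loc_nonzero Y s0 (ex_derive_continuous _ _ DY) Y0).
    assert (Lz : locally s0 (fun t => lor (qstar t) (q t) = 0)).
    { eapply filter_imp; [|apply (filter_and _ _ LY (in_I_loc _ _ _ Hs0))].
      intros t [Yt It]. rewrite HY in Yt by auto.
      assert (E := proj1 (Key t It) (Hd t It)). apply Rmult_integral in E.
      destruct E as [E|E]; [|contradiction].
      rewrite (Hth t It), lor_add_l, !lor_scal_l, (S1 t It). change (central_normal q t) with (h t).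
      rewrite (lor_sym (h t)), (S5 t It), E. ring. }
    assert (D1 := vder_lor _ _ _ _ _ Dqs Dq).
    assert (D2 : is_derive (fun t => lor (qstar t) (q t)) s0 0).
    { apply (is_derive_ext_loc (fun _ => 0)); [|apply d_const].
      eapply filter_imp; [|exact Lz]. intros t Ht; symmetry; auto. }
    assert (E := is_derive_unique _ _ _ D1). rewrite (is_derive_unique _ _ _ D2) in E.
    destruct (S10 s0 Hs0) as [_ Eq]. rewrite Eq, (Hth s0 Hs0), (S3 s0 Hs0) in E.
    change (central_normal q s0) with (h s0) in E.
    rewrite lor_scal_l, lor_scal_r, lor_add_l, !lor_scal_l, (S6 s0), (S4 s0 Hs0), (S5 s0 Hs0) in E.
    destruct (FR s0 Hs0) as [_ [AQ _]]. rewrite AQ in E.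
    apply (proj2 (Hmk s0 Hs0)). ring_simplify in E. symmetry; exact E.
  - intros HX s Hs. apply (proj2 (Key s Hs)). rewrite (HX s Hs). ring.
Qed.
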